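(* Let $R$ be a ring, $I$ a non-empty countable set, $D=\{\delta_i\mid i\in I\}$ a family of derivations of $R$, $X=\{x_i\mid i\in I\}$ a set of distinct non-commuting indeterminates, and $S=R[X;D]$. For $J\subseteq I$ put $X_J=\{x_i\mid i\in J\}$, $D_J=\{\delta_i\mid i\in J\}$ and $S_J=R[X_J;D_J]$. Then for every $J\subseteq I$, $S_J$ is both a right corner and a left corner of $S$. In particular, if $S$ is left (respectively right) quasi-duo, then $S_J$ is left (respectively right) quasi-duo for every subset $J\subseteq I$.
   Context: All rings are unital and associative. A derivation of $R$ is an additive map $\delta:R\to R$ with $\delta(rs)=r\delta(s)+\delta(r)s$. The differential polynomial ring in several indeterminates $R[X;D]$ is the set of all (noncommutative) polynomials in the indeterminates $x_i\in X$ (i.e. finite $R$-linear combinations $a_1t_1+\cdots+a_nt_n$ of monomials $t_k$, finite words in the alphabet $X$, coefficients written on the left), with natural addition and multiplication generated by the commutation rules $x_ia=ax_i+\delta_i(a)$ for $a\in R$, $i\in I$ (the $\delta_i$ need not be distinct). A subring $B$ of a ring $A$ (unital, possibly with $1_B\neq 1_A$) is a left corner of $A$ if there is an additive subgroup $C$ of $A$ with $A=B\oplus C$ and $BC\subseteq C$; it is a right corner if instead $CB\subseteq C$. A ring is left (right) quasi-duo if every maximal left (right) ideal is two-sided. *)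

(* Defs.v *)
From HB Require Import structures.
From mathcomp Require Import all_boot all_order all_algebra.
Set Implicit Arguments. Unset Strict Implicit. Unset Printing Implicit Defensive.
Import GRing.Theory.
Local Open Scope ring_scope.

Definition is_derivation (R : pzRingType) (d : R -> R) : Prop :=
  (forall r s, d (r + s) = d r + d s) /\
  (forall r s, d (r * s) = r * d s + d r * s).

Definition monom (S : pzRingType) (I : Type) (x : I -> S) (w : seq I) : S :=
  \prod_(i <- w) x i.

Definition lincomb (R S : pzRingType) (I : Type) (phi : R -> S) (x : I -> S)
  (l : seq (R * seq I)) : S :=
  \sum_(p <- l) phi p.1 * monom x p.2.

(* S is (an isomorphic copy of) the differential polynomial ring R[X;D]:
   via phi : R -> S and the indeterminates x_i, S is the free left R-module
   on the set of all words in the alphabet X = {x_i | i in I}, and the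
   multiplication obeys x_i a = a x_i + delta_i(a). *)
Definition is_diff_poly_ring (R S : pzRingType) (I : eqType)
  (delta : I -> R -> R) (phi : {rmorphism R -> S}) (x : I -> S) : Prop :=
  [/\
      forall s : S, exists l : seq (R * seq I), s = lincomb phi x l,
      forall l : seq (R * seq I), uniq (map snd l) ->
        lincomb phi x l = 0 -> forall p, p \in l -> p.1 = 0
    &
      forall (i : I) (a : R), x i * phi a = phi a * x i + phi (delta i a)].

(* S_J = R[X_J;D_J], viewed inside S: the R-combinations of words whose
   letters all lie in J. *)
Definition subpoly (R S : pzRingType) (I : eqType) (phi : R -> S) (x : I -> S)
  (J : I -> Prop) : S -> Prop :=
  fun s => exists l : seq (R * seq I),
    (forall p, p \in l -> forall i, i \in p.2 -> J i) /\ s = lincomb phi x l.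

Definition add_subgroup (A : pzRingType) (C : A -> Prop) : Prop :=
  [/\ C 0, forall a b, C a -> C b -> C (a + b) & forall a, C a -> C (- a)].

Definition subring (A : pzRingType) (B : A -> Prop) : Prop :=
  [/\ add_subgroup B, exists e, B e /\ forall b, B b -> e * b = b /\ b * e = b
    & forall a b, B a -> B b -> B (a * b)].

Definition direct_sum (A : pzRingType) (B C : A -> Prop) : Prop :=
  (forall a, exists b c, [/\ B b, C c & a = b + c]) /\
  (forall a, B a -> C a -> a = 0).

Definition left_corner (A : pzRingType) (B : A -> Prop) : Prop :=
  subring B /\ exists C : A -> Prop,
    [/\ add_subgroup C, direct_sum B C & forall b c, B b -> C c -> C (b * c)].

Definition right_corner (A : pzRingType) (B : A -> Prop) : Prop :=
  subring B /\ exists C : A -> Prop,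
    [/\ add_subgroup C, direct_sum B C & forall b c, B b -> C c -> C (c * b)].

(* Ideals of the ring B (a subring of A, or A itself with B = fun _ => True). *)
Definition left_ideal_in (A : pzRingType) (B L : A -> Prop) : Prop :=
  [/\ forall a, L a -> B a, add_subgroup L & forall b l, B b -> L l -> L (b * l)].

Definition right_ideal_in (A : pzRingType) (B L : A -> Prop) : Prop :=
  [/\ forall a, L a -> B a, add_subgroup L & forall b l, B b -> L l -> L (l * b)].

Definition proper_in (A : pzRingType) (B L : A -> Prop) : Prop :=
  exists b, B b /\ ~ L b.

Definition max_left_ideal_in (A : pzRingType) (B L : A -> Prop) : Prop :=
  [/\ left_ideal_in B L, proper_in B L &
      forall M, left_ideal_in B M -> proper_in B M ->
        (forall a, L a -> M a) -> forall a, M a -> L a].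

Definition max_right_ideal_in (A : pzRingType) (B L : A -> Prop) : Prop :=
  [/\ right_ideal_in B L, proper_in B L &
      forall M, right_ideal_in B M -> proper_in B M ->
        (forall a, L a -> M a) -> forall a, M a -> L a].

Definition left_quasi_duo_in (A : pzRingType) (B : A -> Prop) : Prop :=
  forall L, max_left_ideal_in B L -> right_ideal_in B L.

Definition right_quasi_duo_in (A : pzRingType) (B : A -> Prop) : Prop :=
  forall L, max_right_ideal_in B L -> left_ideal_in B L.

(* Main.v *)
Require Import Defs.
From HB Require Import structures.
From mathcomp Require Import all_boot all_order all_algebra.
From mathcomp Require classical_sets.
From Stdlib Require Import Classical.
Import GRing.Theory.
Local Open Scope ring_scope.
Set Implicit Arguments. Unset Strict Implicit. Unset Printing Implicit Defensive.

Definition rlincomb (R S : pzRingType) (I : Type) (phi : R -> S) (x : I -> S)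
  (l : seq (R * seq I)) : S :=
  \sum_(p <- l) monom x p.2 * phi p.1.

Definition coef (R : pzRingType) (I : eqType) (l : seq (R * seq I)) (w : seq I) : R :=
  \sum_(p <- l | p.2 == w) p.1.

Lemma monom_nil (S : pzRingType) (I : Type) (x : I -> S) : monom x [::] = 1.
Proof. by rewrite /monom big_nil. Qed.

Lemma monom_cons (S : pzRingType) (I : Type) (x : I -> S) i w :
  monom x (i :: w) = x i * monom x w.
Proof. by rewrite /monom big_cons. Qed.

Lemma monom_cat (S : pzRingType) (I : Type) (x : I -> S) w v :
  monom x (w ++ v) = monom x w * monom x v.
Proof. by rewrite /monom big_cat. Qed.

Lemma lincomb_nil (R S : pzRingType) (I : Type) (phi : R -> S) (x : I -> S) :
  lincomb phi x [::] = 0.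
Proof. by rewrite /lincomb big_nil. Qed.

Lemma lincomb_cons (R S : pzRingType) (I : Type) (phi : R -> S) (x : I -> S) p l :
  lincomb phi x (p :: l) = phi p.1 * monom x p.2 + lincomb phi x l.
Proof. by rewrite /lincomb big_cons. Qed.

Lemma lincomb_cat (R S : pzRingType) (I : Type) (phi : R -> S) (x : I -> S) l1 l2 :
  lincomb phi x (l1 ++ l2) = lincomb phi x l1 + lincomb phi x l2.
Proof. by rewrite /lincomb big_cat. Qed.

Lemma lincomb_neg (R S : pzRingType) (I : Type) (phi : {rmorphism R -> S}) (x : I -> S) l :
  lincomb phi x [seq (- p.1, p.2) | p <- l] = - lincomb phi x l.
Proof.
rewrite /lincomb big_map -sumrN; apply: eq_bigr => p _.
by rewrite /= rmorphN mulNr.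
Qed.

Lemma rlincomb_nil (R S : pzRingType) (I : Type) (phi : R -> S) (x : I -> S) :
  rlincomb phi x [::] = 0.
Proof. by rewrite /rlincomb big_nil. Qed.

Lemma rlincomb_cons (R S : pzRingType) (I : Type) (phi : R -> S) (x : I -> S) p l :
  rlincomb phi x (p :: l) = monom x p.2 * phi p.1 + rlincomb phi x l.
Proof. by rewrite /rlincomb big_cons. Qed.

Lemma rlincomb_cat (R S : pzRingType) (I : Type) (phi : R -> S) (x : I -> S) l1 l2 :
  rlincomb phi x (l1 ++ l2) = rlincomb phi x l1 + rlincomb phi x l2.
Proof. by rewrite /rlincomb big_cat. Qed.

Lemma rlincomb_neg (R S : pzRingType) (I : Type) (phi : {rmorphism R -> S}) (x : I -> S) l :
  rlincomb phi x [seq (- p.1, p.2) | p <- l] = - rlincomb phi x l.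
Proof.
rewrite /rlincomb big_map -sumrN; apply: eq_bigr => p _.
by rewrite /= rmorphN mulrN.
Qed.

Lemma sum_pred1_uniq (T : eqType) (V : nmodType) (r : seq T) (a : T) (F : T -> V) :
  uniq r -> a \in r -> \sum_(w <- r | a == w) F w = F a.
Proof.
move=> ur ar; rewrite (big_rem a) // eqxx /= big1_seq ?addr0 // => w /andP[/eqP <-].
by rewrite mem_rem_uniqF.
Qed.

Lemma sum_undup (T U : eqType) (V : nmodType) (l : seq T) (g : T -> U) (F : T -> V) :
  \sum_(p <- l) F p = \sum_(w <- undup (map g l)) \sum_(p <- l | g p == w) F p.
Proof.
under [RHS]eq_bigr do rewrite big_mkcond.
rewrite exchange_big /= !big_seq; apply: eq_bigr => p pl.
rewrite -big_mkcond /= (@sum_pred1_uniq _ _ _ (g p) (fun _ => F p)) ?undup_uniq //.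
by rewrite mem_undup; apply: map_f.
Qed.

Lemma lincomb_coef (R S : pzRingType) (I : eqType) (phi : {rmorphism R -> S}) (x : I -> S) l :
  lincomb phi x l = \sum_(w <- undup (map snd l)) phi (coef l w) * monom x w.
Proof.
rewrite /lincomb (sum_undup _ snd); apply: eq_bigr => w _.
by rewrite /coef rmorph_sum mulr_suml; apply: eq_bigr => p /eqP ->.
Qed.

Lemma rlincomb_coef (R S : pzRingType) (I : eqType) (phi : {rmorphism R -> S}) (x : I -> S) l :
  rlincomb phi x l = \sum_(w <- undup (map snd l)) monom x w * phi (coef l w).
Proof.
rewrite /rlincomb (sum_undup _ snd); apply: eq_bigr => w _.
by rewrite /coef rmorph_sum mulr_sumr; apply: eq_bigr => p /eqP ->.
Qed.

Lemma lincomb_coef0 (R S : pzRingType) (I : eqType) (phi : {rmorphism R -> S}) (x : I -> S) l :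
  (forall w, coef l w = 0) -> lincomb phi x l = 0.
Proof. by move=> H; rewrite lincomb_coef big1 // => w _; rewrite H rmorph0 mul0r. Qed.

Lemma rlincomb_coef0 (R S : pzRingType) (I : eqType) (phi : {rmorphism R -> S}) (x : I -> S) l :
  (forall w, coef l w = 0) -> rlincomb phi x l = 0.
Proof. by move=> H; rewrite rlincomb_coef big1 // => w _; rewrite H rmorph0 mulr0. Qed.

Lemma coef_notin (R : pzRingType) (I : eqType) (l : seq (R * seq I)) w :
  (forall p, p \in l -> p.2 <> w) -> coef l w = 0.
Proof.
by move=> H; rewrite /coef big1_seq // => p /andP[/eqP e pl]; case: (H p pl).
Qed.

Lemma coef_cat (R : pzRingType) (I : eqType) (l1 l2 : seq (R * seq I)) w :
  coef (l1 ++ l2) w = coef l1 w + coef l2 w.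
Proof. by rewrite /coef big_cat. Qed.

Lemma coef_neg (R : pzRingType) (I : eqType) (l : seq (R * seq I)) w :
  coef [seq (- p.1, p.2) | p <- l] w = - coef l w.
Proof. by rewrite /coef big_map sumrN. Qed.

Lemma coef_indep (R S : pzRingType) (I : eqType) (phi : {rmorphism R -> S}) (x : I -> S)
  (Hind : forall l : seq (R * seq I), uniq (map snd l) ->
        lincomb phi x l = 0 -> forall p, p \in l -> p.1 = 0) l :
  lincomb phi x l = 0 -> forall w, coef l w = 0.
Proof.
move=> H0 w.
pose l' := [seq (coef l v, v) | v <- undup (map snd l)].
have e : map snd l' = undup (map snd l) by rewrite -map_comp; apply: map_id_in.
have H' : lincomb phi x l' = 0.
  by rewrite -{}H0 [RHS]lincomb_coef /lincomb big_map.
case: (boolP (w \in map snd l)) => wl.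
  apply: (Hind l' _ H' (coef l w, w)); first by rewrite e undup_uniq.
  by apply: (map_f (fun v => (coef l v, v))); rewrite mem_undup.
apply: coef_notin => p pl e2; move/negP: wl; apply; rewrite -e2; exact: map_f.
Qed.

Definition spanL (R S : pzRingType) (I : eqType) (phi : R -> S) (x : I -> S)
  (P : seq I -> Prop) (s : S) : Prop :=
  exists l : seq (R * seq I), (forall p, p \in l -> P p.2) /\ s = lincomb phi x l.

Definition spanR (R S : pzRingType) (I : eqType) (phi : R -> S) (x : I -> S)
  (P : seq I -> Prop) (s : S) : Prop :=
  exists l : seq (R * seq I), (forall p, p \in l -> P p.2) /\ s = rlincomb phi x l.

Lemma xmul_lincomb (R S : pzRingType) (I : eqType) (delta : I -> R -> R)
  (phi : {rmorphism R -> S}) (x : I -> S)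
  (Hc : forall i a, x i * phi a = phi a * x i + phi (delta i a)) i l :
  exists l', x i * lincomb phi x l = lincomb phi x l' /\
    forall q, q \in l' -> exists2 p, p \in l & (q.2 = i :: p.2 \/ q.2 = p.2).
Proof.
elim: l => [|p l [l' [e H]]].
  by exists [::]; rewrite !lincomb_nil mulr0.
exists ((p.1, i :: p.2) :: (delta i p.1, p.2) :: l'); split.
  rewrite !lincomb_cons mulrDr e mulrA Hc mulrDl monom_cons /= !mulrA addrA //.
move=> q; rewrite !inE => /orP[/eqP ->|/orP[/eqP ->|ql]].
- by exists p; rewrite ?inE ?eqxx //; left.
- by exists p; rewrite ?inE ?eqxx //; right.
- by case: (H q ql) => p' pl' E; exists p'; rewrite // inE pl' orbT.
Qed.

Lemma comm_monom (R S : pzRingType) (I : eqType) (delta : I -> R -> R)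
  (phi : {rmorphism R -> S}) (x : I -> S)
  (Hc : forall i a, x i * phi a = phi a * x i + phi (delta i a)) w b :
  exists l, monom x w * phi b = phi b * monom x w + lincomb phi x l /\
    forall p, p \in l -> subseq p.2 w /\ (size p.2 < size w)%N.
Proof.
elim: w b => [|i w IH] b.
  by exists [::]; rewrite monom_nil lincomb_nil mul1r mulr1 addr0.
have [l [e H]] := IH b.
have [l' [e' H']] := xmul_lincomb Hc i l.
exists ((delta i b, w) :: l'); split.
  rewrite monom_cons -mulrA e mulrDr mulrA Hc mulrDl e' lincomb_cons /=.
  by rewrite -!mulrA -monom_cons addrA.
move=> q; rewrite inE => /orP[/eqP -> /=|ql].
  by split; [exact: subseq_cons | exact: ltnSn].
have [p pl [->|->]] := H' q ql; have [sp zp] := H p pl.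
  by rewrite /= eqxx sp /= ltnS.
split; last by rewrite /= ltnS ltnW.
exact: (subseq_trans sp (subseq_cons w i)).
Qed.

Lemma ltor (R S : pzRingType) (I : eqType) (delta : I -> R -> R)
  (phi : {rmorphism R -> S}) (x : I -> S)
  (Hc : forall i a, x i * phi a = phi a * x i + phi (delta i a)) v d :
  exists l, phi d * monom x v = rlincomb phi x l /\
    forall p, p \in l -> subseq p.2 v.
Proof.
elim: v d => [|i v IH] d.
  by exists [:: (d, [::])]; rewrite rlincomb_cons rlincomb_nil monom_nil mulr1 mul1r addr0; split => // p; rewrite inE => /eqP ->.
have [l1 [e1 H1]] := IH d.
have [l2 [e2 H2]] := IH (delta i d).
exists ([seq (p.1, i :: p.2) | p <- l1] ++ [seq (- p.1, p.2) | p <- l2]); split.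
  have E : phi d * x i = x i * phi d - phi (delta i d) by rewrite Hc addrK.
  rewrite monom_cons mulrA E mulrBl -mulrA e1 e2 rlincomb_cat rlincomb_neg.
  congr (_ - _); rewrite /rlincomb big_map mulr_sumr; apply: eq_bigr => p _.
  by rewrite monom_cons mulrA.
move=> q; rewrite mem_cat => /orP[/mapP[p pl ->]|/mapP[p pl ->]] /=.
  by rewrite eqxx H1.
exact: (subseq_trans (H2 p pl) (subseq_cons v i)).
Qed.

Lemma spanL_add (R S : pzRingType) (I : eqType) (phi : {rmorphism R -> S}) (x : I -> S) P :
  add_subgroup (spanL phi x P).
Proof.
split.
- by exists [::]; rewrite lincomb_nil.
- move=> a b [l1 [H1 ->]] [l2 [H2 ->]]; exists (l1 ++ l2); rewrite lincomb_cat; split => //.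
  by move=> p; rewrite mem_cat => /orP[/H1|/H2].
- move=> a [l [H ->]]; exists [seq (- p.1, p.2) | p <- l]; rewrite lincomb_neg; split => //.
  by move=> q /mapP[p pl ->] /=; exact: H pl.
Qed.

Lemma spanR_add (R S : pzRingType) (I : eqType) (phi : {rmorphism R -> S}) (x : I -> S) P :
  add_subgroup (spanR phi x P).
Proof.
split.
- by exists [::]; rewrite rlincomb_nil.
- move=> a b [l1 [H1 ->]] [l2 [H2 ->]]; exists (l1 ++ l2); rewrite rlincomb_cat; split => //.
  by move=> p; rewrite mem_cat => /orP[/H1|/H2].
- move=> a [l [H ->]]; exists [seq (- p.1, p.2) | p <- l]; rewrite rlincomb_neg; split => //.
  by move=> q /mapP[p pl ->] /=; exact: H pl.
Qed.

Lemma add_sum (A : pzRingType) (C : A -> Prop) (T : Type) (r : seq T) (Pr : pred T) (F : T -> A) :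
  add_subgroup C -> (forall t, Pr t -> C (F t)) -> C (\sum_(t <- r | Pr t) F t).
Proof. by move=> [C0 CD _] H; apply: big_ind. Qed.

Lemma lincomb_mulmon (R S : pzRingType) (I : eqType) (phi : {rmorphism R -> S}) (x : I -> S) a L v :
  phi a * lincomb phi x L * monom x v =
  \sum_(r <- L) phi (a * r.1) * monom x (r.2 ++ v).
Proof.
rewrite /lincomb mulr_sumr mulr_suml; apply: eq_bigr => r _.
by rewrite rmorphM monom_cat !mulrA.
Qed.

Lemma mul_spanL (R S : pzRingType) (I : eqType) (delta : I -> R -> R)
  (phi : {rmorphism R -> S}) (x : I -> S)
  (Hc : forall i a, x i * phi a = phi a * x i + phi (delta i a))
  (P Q T : seq I -> Prop) s t :
  (forall w v w', P w -> Q v -> subseq w' w -> T (w' ++ v)) ->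
  spanL phi x P s -> spanL phi x Q t -> spanL phi x T (s * t).
Proof.
move=> HT [l1 [H1 ->]] [l2 [H2 ->]].
rewrite /lincomb mulr_suml big_seq; apply: add_sum; first exact: spanL_add.
move=> p pl; rewrite mulr_sumr big_seq; apply: add_sum; first exact: spanL_add.
move=> q ql.
have [L0 [e0 HL0]] := comm_monom Hc p.2 q.1.
exists [seq (p.1 * r.1, r.2 ++ q.2) | r <- (q.1, p.2) :: L0]; split.
  move=> z /mapP[r rl ->] /=; apply: (HT p.2) => //; [exact: H1|exact: H2|].
  move: rl; rewrite inE => /orP[/eqP -> //|rl]; exact: (HL0 r rl).1.
rewrite /lincomb big_map /= mulrA -(mulrA _ (monom x p.2)) e0.
by rewrite mulrDr mulrDl lincomb_mulmon big_cons /= rmorphM monom_cat !mulrA.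
Qed.

Lemma mul_spanRL (R S : pzRingType) (I : eqType) (delta : I -> R -> R)
  (phi : {rmorphism R -> S}) (x : I -> S)
  (Hc : forall i a, x i * phi a = phi a * x i + phi (delta i a))
  (P Q T : seq I -> Prop) s t :
  (forall w v v', P w -> Q v -> subseq v' v -> T (w ++ v')) ->
  spanR phi x P s -> spanL phi x Q t -> spanR phi x T (s * t).
Proof.
move=> HT [l1 [H1 ->]] [l2 [H2 ->]].
rewrite /rlincomb /lincomb mulr_suml big_seq; apply: add_sum; first exact: spanR_add.
move=> p pl; rewrite mulr_sumr big_seq; apply: add_sum; first exact: spanR_add.
move=> q ql.
have [L0 [e0 HL0]] := ltor Hc q.2 (p.1 * q.1).
exists [seq (r.1, p.2 ++ r.2) | r <- L0]; split.
  move=> z /mapP[r rl ->] /=; apply: (HT p.2 q.2) => //; [exact: H1|exact: H2|exact: HL0].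
rewrite -mulrA (mulrA (phi p.1)) -rmorphM e0 /rlincomb big_map mulr_sumr.
by apply: eq_bigr => r _; rewrite /= monom_cat mulrA.
Qed.

Definition good (I : eqType) (J : I -> Prop) (w : seq I) : Prop := forall i, i \in w -> J i.

Lemma good_subseq (I : eqType) (J : I -> Prop) w w' :
  good J w -> subseq w' w -> good J w'.
Proof. by move=> H s i iw; apply: H; apply: (mem_subseq s). Qed.

Lemma good_cat (I : eqType) (J : I -> Prop) w v :
  good J w -> good J v -> good J (w ++ v).
Proof. by move=> H1 H2 i; rewrite mem_cat => /orP[/H1|/H2]. Qed.

Lemma good_catr (I : eqType) (J : I -> Prop) w v :
  good J (w ++ v) -> good J v.
Proof. by move=> H i iv; apply: H; rewrite mem_cat iv orbT. Qed.

Lemma good_catl (I : eqType) (J : I -> Prop) w v :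
  good J (w ++ v) -> good J w.
Proof. by move=> H i iv; apply: H; rewrite mem_cat iv. Qed.

Lemma good_nil (I : eqType) (J : I -> Prop) : good J [::].
Proof. by []. Qed.

Lemma R2L (R S : pzRingType) (I : eqType) (delta : I -> R -> R)
  (phi : {rmorphism R -> S}) (x : I -> S)
  (Hc : forall i a, x i * phi a = phi a * x i + phi (delta i a)) n l :
  (forall p, p \in l -> (size p.2 <= n)%N) ->
  exists T, rlincomb phi x l = lincomb phi x l + lincomb phi x T /\
    forall q, q \in T -> (size q.2 < n)%N.
Proof.
elim: l => [|p l IH] H.
  by exists [::]; rewrite rlincomb_nil !lincomb_nil addr0.
have [|T [eT HT]] := IH; first by move=> q ql; apply: H; rewrite inE ql orbT.
have [L0 [e0 H0]] := comm_monom Hc p.2 p.1.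
have sp : (size p.2 <= n)%N by apply: H; rewrite inE eqxx.
exists (L0 ++ T); split.
  by rewrite rlincomb_cons lincomb_cons eT e0 lincomb_cat; rewrite -!addrA; congr (_ + _); rewrite addrCA.
move=> q; rewrite mem_cat => /orP[/H0[_ s]|/HT //].
exact: leq_trans s sp.
Qed.

Lemma inter_R (R S : pzRingType) (I : eqType) (delta : I -> R -> R)
  (phi : {rmorphism R -> S}) (x : I -> S)
  (Hc : forall i a, x i * phi a = phi a * x i + phi (delta i a))
  (Hind : forall l : seq (R * seq I), uniq (map snd l) ->
        lincomb phi x l = 0 -> forall p, p \in l -> p.1 = 0) (J : I -> Prop) n :
  forall l, (forall p, p \in l -> ~ good J p.2 /\ (size p.2 <= n)%N) ->
  spanL phi x (good J) (rlincomb phi x l) -> rlincomb phi x l = 0.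
Proof.
elim: n => [|n IH] l H.
  case: l H => [|p l] H _; first by rewrite rlincomb_nil.
  have [bp sp] := H p (mem_head _ _); exfalso; apply: bp.
  by move: sp; rewrite leqn0 => /nilP ->.
move=> [g [Hg eg]].
have [|T [eT HT]] := R2L Hc (n := n.+1) (l := l); first by move=> p /H[].
have E0 : lincomb phi x (l ++ T ++ [seq (- p.1, p.2) | p <- g]) = 0.
  by rewrite !lincomb_cat lincomb_neg addrA -eT eg subrr.
have Hcf := coef_indep Hind E0.
pose l1 := filter (fun p : R * seq I => size p.2 == n.+1) l.
pose l2 := filter (fun p : R * seq I => size p.2 != n.+1) l.
have Esplit : rlincomb phi x l = rlincomb phi x l1 + rlincomb phi x l2.
  by rewrite /rlincomb !big_filter (bigID (fun p : R * seq I => size p.2 == n.+1)).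
have E1 : rlincomb phi x l1 = 0.
  apply: rlincomb_coef0 => w.
  case: (boolP (size w == n.+1)) => sw; last first.
    by apply: coef_notin => p; rewrite mem_filter => /andP[/eqP sp _] ew; move: sw; rewrite -ew sp eqxx.
  have -> : coef l1 w = coef l w.
    rewrite /coef big_filter_cond; apply: eq_bigl => p.
    by case: (boolP (p.2 == w)) => [/eqP ->|]; rewrite ?andbT ?andbF.
  have := Hcf w; rewrite !coef_cat coef_neg.
  case: (classic (good J w)) => gw.
    by rewrite (@coef_notin _ _ l) // => p pl ew; have [bp _] := H p pl; apply: bp; rewrite ew.
  rewrite (@coef_notin _ _ T) ?(@coef_notin _ _ g) ?add0r ?oppr0 ?addr0 //.
    by move=> p pg ew; apply: gw; rewrite -ew; apply: Hg.
  by move=> p pT ew; have := HT p pT; rewrite ew (eqP sw) ltnn.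
have E2 : rlincomb phi x l2 = 0.
  apply: IH.
    move=> p; rewrite mem_filter => /andP[sp pl]; have [bp sp'] := H p pl; split => //.
    by move: sp'; rewrite leq_eqVlt (negPf sp) ltnS.
  by exists g; split => //; rewrite -eg Esplit E1 add0r.
by rewrite Esplit E1 E2 addr0.
Qed.

Lemma B_subring (R S : pzRingType) (I : eqType) (delta : I -> R -> R)
  (phi : {rmorphism R -> S}) (x : I -> S)
  (Hc : forall i a, x i * phi a = phi a * x i + phi (delta i a)) (J : I -> Prop) :
  subring (spanL phi x (good J)).
Proof.
split; first exact: spanL_add.
  exists 1; split; last by move=> b _; rewrite mul1r mulr1.
  exists [:: (1, [::])]; split; first by move=> p; rewrite inE => /eqP ->.
  by rewrite lincomb_cons lincomb_nil rmorph1 monom_nil mulr1 addr0.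
move=> a b; apply: (mul_spanL Hc) => w v w' gw gv s.
exact: good_cat (good_subseq gw s) gv.
Qed.

Lemma B_one (R S : pzRingType) (I : eqType) (phi : {rmorphism R -> S}) (x : I -> S) (J : I -> Prop) :
  spanL phi x (good J) 1.
Proof.
exists [:: (1, [::])]; split; first by move=> p; rewrite inE => /eqP ->.
by rewrite lincomb_cons lincomb_nil rmorph1 monom_nil mulr1 addr0.
Qed.

Lemma bound_ex (R : pzRingType) (I : eqType) (l : seq (R * seq I)) :
  exists n, forall p, p \in l -> (size p.2 <= n)%N.
Proof.
elim: l => [|p l [n Hn]]; first by exists 0%N.
exists (maxn (size p.2) n) => q; rewrite inE => /orP[/eqP ->|ql].
  exact: leq_maxl.
exact: leq_trans (Hn q ql) (leq_maxr _ _).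
Qed.

Lemma left_corner_B (R S : pzRingType) (I : eqType) (delta : I -> R -> R)
  (phi : {rmorphism R -> S}) (x : I -> S)
  (Hc : forall i a, x i * phi a = phi a * x i + phi (delta i a))
  (Hsurj : forall s : S, exists l : seq (R * seq I), s = lincomb phi x l)
  (Hind : forall l : seq (R * seq I), uniq (map snd l) ->
        lincomb phi x l = 0 -> forall p, p \in l -> p.1 = 0) (J : I -> Prop) :
  left_corner (spanL phi x (good J)).
Proof.
split; first exact: B_subring Hc J.
have addB := spanL_add phi x (good J).
have addC := spanL_add phi x (fun w => ~ good J w).
exists (spanL phi x (fun w => ~ good J w)); split => //.
- split.
    move=> s; have [l ->] := Hsurj s; elim: l => [|p l [b [c [Bb Cc e]]]].
      by exists 0, 0; rewrite lincomb_nil addr0; split => //; [case: addB|case: addC].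
    have Hp : (forall q, q \in [:: p] -> (fun q : R * seq I => True) q) by [].
    case: (classic (good J p.2)) => gp.
      exists (phi p.1 * monom x p.2 + b), c; split => //.
        case: addB => _ D _; apply: D Bb; exists [:: p]; split.
          by move=> q; rewrite inE => /eqP ->.
        by rewrite lincomb_cons lincomb_nil addr0.
      by rewrite lincomb_cons e addrA.
    exists b, (phi p.1 * monom x p.2 + c); split => //.
      case: addC => _ D _; apply: D Cc; exists [:: p]; split.
        by move=> q; rewrite inE => /eqP ->.
      by rewrite lincomb_cons lincomb_nil addr0.
    by rewrite lincomb_cons e addrCA.
  move=> a [g [Hg ->]] [c [Hcc ec]].
  apply: lincomb_coef0 => w.
  have E0 : lincomb phi x (g ++ [seq (- p.1, p.2) | p <- c]) = 0.
    by rewrite lincomb_cat lincomb_neg -ec subrr.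
  have := coef_indep Hind E0 w; rewrite coef_cat coef_neg.
  case: (classic (good J w)) => gw.
    by rewrite (@coef_notin _ _ c) ?oppr0 ?addr0 // => p pc ew; apply: (Hcc p pc); rewrite ew.
  by rewrite (@coef_notin _ _ g) // => p pg ew; apply: gw; rewrite -ew; apply: Hg.
- move=> b c; apply: (mul_spanL Hc) => w v w' gw bv s gwv.
  by apply: bv; apply: good_catr gwv.
Qed.

Lemma right_corner_B (R S : pzRingType) (I : eqType) (delta : I -> R -> R)
  (phi : {rmorphism R -> S}) (x : I -> S)
  (Hc : forall i a, x i * phi a = phi a * x i + phi (delta i a))
  (Hsurj : forall s : S, exists l : seq (R * seq I), s = lincomb phi x l)
  (Hind : forall l : seq (R * seq I), uniq (map snd l) ->
        lincomb phi x l = 0 -> forall p, p \in l -> p.1 = 0) (J : I -> Prop) :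
  right_corner (spanL phi x (good J)).
Proof.
split; first exact: B_subring Hc J.
have addB := spanL_add phi x (good J).
have addC := spanR_add phi x (fun w => ~ good J w).
have splitR : forall L, exists b c, [/\ spanL phi x (good J) b,
    spanR phi x (fun w => ~ good J w) c & rlincomb phi x L = b + c].
  elim=> [|p L [b [c [Bb Cc e]]]].
    by exists 0, 0; rewrite rlincomb_nil addr0; split => //; [case: addB|case: addC].
  case: (classic (good J p.2)) => gp.
    exists (monom x p.2 * phi p.1 + b), c; split => //.
      case: addB => _ D _; apply: D Bb.
      have [L0 [e0 H0]] := comm_monom Hc p.2 p.1.
      exists ((p.1, p.2) :: L0); split.
        move=> q; rewrite inE => /orP[/eqP -> //|/H0[s _]]; exact: good_subseq gp s.
      by rewrite lincomb_cons e0.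
    by rewrite rlincomb_cons e addrA.
  exists b, (monom x p.2 * phi p.1 + c); split => //.
    case: addC => _ D _; apply: D Cc; exists [:: p]; split.
      by move=> q; rewrite inE => /eqP ->.
    by rewrite rlincomb_cons rlincomb_nil addr0.
  by rewrite rlincomb_cons e addrCA.
exists (spanR phi x (fun w => ~ good J w)); split => //.
- split.
    move=> s; have [l ->] := Hsurj s; elim: l => [|p l [b [c [Bb Cc e]]]].
      by exists 0, 0; rewrite lincomb_nil addr0; split => //; [case: addB|case: addC].
    have [L [eL _]] := ltor Hc p.2 p.1.
    have [b' [c' [Bb' Cc' e']]] := splitR L.
    exists (b' + b), (c' + c); split.
    + by case: addB => _ D _; apply: D.
    + by case: addC => _ D _; apply: D.
    + by rewrite lincomb_cons eL e' e addrACA.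
  move=> a Ba [c [Hcc ec]].
  have [n Hn] := bound_ex c.
  rewrite ec; apply: (inter_R Hc Hind (n := n)).
    by move=> p pc; split; [apply: Hcc|apply: Hn].
  by rewrite -ec.
- move=> b c Bb Cc; apply: (mul_spanRL Hc) Cc Bb => w v v' bw gv s gwv.
  by apply: bw; apply: good_catl gwv.
Qed.
Lemma zorn_gen (A : pzRingType) (m : A -> A -> A) (M : A -> Prop) :
  add_subgroup M -> (forall b l, M l -> M (m b l)) -> ~ M 1 ->
  exists N : A -> Prop, [/\ add_subgroup N, (forall b l, N l -> N (m b l)), ~ N 1,
    (forall a, M a -> N a) &
    forall M' : A -> Prop, add_subgroup M' -> (forall b l, M' l -> M' (m b l)) -> ~ M' 1 ->
      (forall a, N a -> M' a) -> forall a, M' a -> N a].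
Proof.
move=> [M0 MD MN] Mm M1.
pose Z (Y : A -> Prop) := fun a => M a \/ Y a.
pose PP := fun Y : A -> Prop => [/\ add_subgroup (Z Y), (forall b l, Z Y l -> Z Y (m b l)) & ~ Z Y 1].
have [|A0 [PA0 maxA0]] := @classical_sets.Zorn_bigcup A PP.
  move=> F FP tot.
  pose U := classical_sets.bigcup F id.
  have lift : forall Y a, F Y -> Z Y a -> Z U a.
    by move=> Y a FY [Ma|Ya]; [left|right; exists Y].
  have single : forall a, Z U a -> M a \/ exists2 Y, F Y & Z Y a.
    by move=> a [Ma|[Y FY Ya]]; [left|right; exists Y => //; right].
  have pair : forall a b, Z U a -> Z U b -> (M a /\ M b) \/ exists2 Y, F Y & Z Y a /\ Z Y b.
    move=> a b [Ma|[Y1 F1 Y1a]] [Mb|[Y2 F2 Y2b]].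
    - by left.
    - by right; exists Y2 => //; split; [left|right].
    - by right; exists Y1 => //; split; [right|left].
    - case: (tot Y1 Y2 F1 F2) => sub.
        by right; exists Y2 => //; split; right => //; apply: sub.
      by right; exists Y1 => //; split; right => //; apply: sub.
  split; first split.
  - by left.
  - move=> a b Ua Ub; case: (pair a b Ua Ub) => [[Ma Mb]|[Y FY [Ya Yb]]]; first by left; apply: MD.
    by apply: (lift Y) => //; have [[_ D _] _ _] := FP Y FY; apply: D.
  - move=> a Ua; case: (single a Ua) => [Ma|[Y FY Ya]]; first by left; apply: MN.
    by apply: (lift Y) => //; have [[_ _ N'] _ _] := FP Y FY; apply: N'.
  - move=> b a Ua; case: (single a Ua) => [Ma|[Y FY Ya]]; first by left; apply: Mm.
    by apply: (lift Y) => //; have [_ Hm _] := FP Y FY; apply: Hm.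
  - move=> U1; case: (single 1 U1) => [//|[Y FY Y1]].
    by have [_ _ H] := FP Y FY; apply: H.
case: PA0 => addN mN N1.
exists (Z A0); split => //; first by move=> a Ma; left.
move=> M' [M'0 M'D M'N] M'm M'1 NM' a M'a.
case: (classic (Z A0 a)) => // Na; exfalso.
have MM' : forall b, M b -> M' b by move=> b Mb; apply: NM'; left.
have ZM' : forall b, Z M' b -> M' b by move=> b [/MM'|].
apply: (maxA0 M').
  split; first by move=> b A0b; apply: NM'; right.
  by move=> sub; apply: Na; right; apply: sub.
split; first split.
- by right.
- by move=> b c /ZM' Hb /ZM' Hc; right; apply: M'D.
- by move=> b /ZM' Hb; right; apply: M'N.
- by move=> b c /ZM' Hc; right; apply: M'm.
- by move/ZM'.
Qed.

Lemma qd_left (A : pzRingType) (B C : A -> Prop) :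
  subring B -> B 1 -> add_subgroup C -> direct_sum B C ->
  (forall b c, B b -> C c -> C (c * b)) ->
  left_quasi_duo_in (fun _ : A => True) -> left_quasi_duo_in B.
Proof.
move=> [[B0 BD BN] _ BM] B1 [C0 CD CN] [dec inter] CB qd L.
move=> [[LB [L0 LD LN] LBm] [b0 [Bb0 nLb0]] maxL].
pose M := fun s => forall a, exists l c, [/\ L l, C c & a * s = l + c].
have LM : forall l, L l -> M l.
  move=> l Ll a; have [be [c [Bbe Cc ->]]] := dec a.
  exists (be * l), (c * l); split; [apply: LBm|apply: CB|rewrite mulrDl] => //; exact: LB.
have [|||N [[N0 ND NN] Nm N1 MN maxN]] := @zorn_gen A (fun b l => b * l) M.
- split.
  + by move=> a; exists 0, 0; rewrite mulr0 addr0.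
  + move=> s t Ms Mt a; have [l1 [c1 [L1 C1 e1]]] := Ms a; have [l2 [c2 [L2 C2 e2]]] := Mt a.
    by exists (l1 + l2), (c1 + c2); split; [apply: LD|apply: CD|rewrite mulrDr e1 e2 addrACA].
  + move=> s Ms a; have [l1 [c1 [L1 C1 e1]]] := Ms a.
    by exists (- l1), (- c1); split; [apply: LN|apply: CN|rewrite mulrN e1 opprD].
- by move=> b s Ms a; have [l1 [c1 [L1 C1 e1]]] := Ms (a * b); exists l1, c1; rewrite mulrA.
- move=> M1; have [l [c [Ll Cc e]]] := M1 1.
  have Bc : B c.
    have -> : c = 1 - l by rewrite mulr1 in e; rewrite e addrC addKr.
    by apply: BD => //; apply: BN; apply: LB.
  have c0 := inter c Bc Cc.
  apply: nLb0; rewrite -(mulr1 b0); apply: LBm => //.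
  by move: e; rewrite mulr1 c0 addr0 => ->.
have [_ _ Nr] : right_ideal_in (fun _ : A => True) N.
  apply: qd; split.
  - by split; [by [] | by split | by move=> b' l _; apply: Nm].
  - by exists 1; split.
  - move=> N' [_ [N'0 N'D N'N] N'm] [b [_ nN'b]] NN' a N'a.
    apply: (maxN N').
    + by split.
    + by move=> b' l; apply: N'm.
    + by move=> N'1; apply: nN'b; rewrite -(mulr1 b); apply: N'm.
    + exact: NN'.
    + exact: N'a.
split; [exact: LB | by split | ].
move=> b l Bb Ll.
have LN' : forall s, L s -> N s by move=> s Ls; apply: MN; exact: (LM s Ls).
apply: (maxL (fun s => N s /\ B s)).
- split; first by move=> a [].
  + split; first by split.
    * by move=> a c [Na Ba] [Nc Bc]; split; [apply: ND|apply: BD].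
    * by move=> a [Na Ba]; split; [apply: NN|apply: BN].
  + by move=> b' l' Bb' [Nl' Bl']; split; [apply: Nm|apply: BM].
- by exists 1; split => // -[].
- by move=> a La; split; [apply: LN'|apply: LB].
- by split; [apply: Nr => //; apply: LN'|apply: BM => //; apply: LB].
Qed.

Lemma qd_right (A : pzRingType) (B C : A -> Prop) :
  subring B -> B 1 -> add_subgroup C -> direct_sum B C ->
  (forall b c, B b -> C c -> C (b * c)) ->
  right_quasi_duo_in (fun _ : A => True) -> right_quasi_duo_in B.
Proof.
move=> [[B0 BD BN] _ BM] B1 [C0 CD CN] [dec inter] CB qd L.
move=> [[LB [L0 LD LN] LBm] [b0 [Bb0 nLb0]] maxL].
pose M := fun s => forall a, exists l c, [/\ L l, C c & s * a = l + c].
have LM : forall l, L l -> M l.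
  move=> l Ll a; have [be [c [Bbe Cc ->]]] := dec a.
  exists (l * be), (l * c); split; [apply: LBm|apply: CB|rewrite mulrDr] => //; exact: LB.
have [|||N [[N0 ND NN] Nm N1 MN maxN]] := @zorn_gen A (fun b l => l * b) M.
- split.
  + by move=> a; exists 0, 0; rewrite mul0r addr0.
  + move=> s t Ms Mt a; have [l1 [c1 [L1 C1 e1]]] := Ms a; have [l2 [c2 [L2 C2 e2]]] := Mt a.
    by exists (l1 + l2), (c1 + c2); split; [apply: LD|apply: CD|rewrite mulrDl e1 e2 addrACA].
  + move=> s Ms a; have [l1 [c1 [L1 C1 e1]]] := Ms a.
    by exists (- l1), (- c1); split; [apply: LN|apply: CN|rewrite mulNr e1 opprD].
- by move=> b s Ms a; have [l1 [c1 [L1 C1 e1]]] := Ms (b * a); exists l1, c1; rewrite -mulrA.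
- move=> M1; have [l [c [Ll Cc e]]] := M1 1.
  have Bc : B c.
    have -> : c = 1 - l by rewrite mulr1 in e; rewrite e addrC addKr.
    by apply: BD => //; apply: BN; apply: LB.
  have c0 := inter c Bc Cc.
  apply: nLb0; rewrite -(mul1r b0); apply: LBm => //.
  by move: e; rewrite mulr1 c0 addr0 => ->.
have [_ _ Nr] : left_ideal_in (fun _ : A => True) N.
  apply: qd; split.
  - by split; [by [] | by split | by move=> b' l _; apply: Nm].
  - by exists 1; split.
  - move=> N' [_ [N'0 N'D N'N] N'm] [b [_ nN'b]] NN' a N'a.
    apply: (maxN N').
    + by split.
    + by move=> b' l; apply: N'm.
    + by move=> N'1; apply: nN'b; rewrite -(mul1r b); apply: N'm.
    + exact: NN'.
    + exact: N'a.
split; [exact: LB | by split | ].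
move=> b l Bb Ll.
have LN' : forall s, L s -> N s by move=> s Ls; apply: MN; exact: (LM s Ls).
apply: (maxL (fun s => N s /\ B s)).
- split; first by move=> a [].
  + split; first by split.
    * by move=> a c [Na Ba] [Nc Bc]; split; [apply: ND|apply: BD].
    * by move=> a [Na Ba]; split; [apply: NN|apply: BN].
  + by move=> b' l' Bb' [Nl' Bl']; split; [apply: Nm|apply: BM].
- by exists 1; split => // -[].
- by move=> a La; split; [apply: LN'|apply: LB].
- by split; [apply: Nr => //; apply: LN'|apply: BM => //; apply: LB].
Qed.

Theorem lemma5p1 (R S : pzRingType) (I : countType) (i0 : I)
  (delta : I -> R -> R) (phi : {rmorphism R -> S}) (x : I -> S)
  (Hder : forall i, is_derivation (delta i))
  (HS : is_diff_poly_ring delta phi x) :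
  forall J : I -> Prop,
    (right_corner (subpoly phi x J) /\ left_corner (subpoly phi x J)) /\
    (left_quasi_duo_in (fun _ : S => True) ->
       left_quasi_duo_in (subpoly phi x J)) /\
    (right_quasi_duo_in (fun _ : S => True) ->
       right_quasi_duo_in (subpoly phi x J)).
Proof.
move=> J; case: HS => Hsurj Hind Hc.
have RC : right_corner (spanL phi x (good J)) := right_corner_B Hc Hsurj Hind J.
have LC : left_corner (spanL phi x (good J)) := left_corner_B Hc Hsurj Hind J.
have B1 : spanL phi x (good J) 1 := B_one phi x J.
split; first by split.
split.
  case: RC => sub [C [addC ds CB]].
  exact: (qd_left sub B1 addC ds CB).
case: LC => sub [C [addC ds CB]].
exact: (qd_right sub B1 addC ds CB).
Qed.
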